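(* Let $\lambda$ be an infinite cardinal. For every coloring $c:[\lambda^+]^2\to\lambda$ there exists a coloring $c^+:[\lambda^+]^2\to\lambda^+$ such that for every cardinal $\mu\le\lambda$ and every partition $p:[\lambda^+]^2\to\mu$: (1) if $c$ witnesses $\lambda^+\nrightarrow_p[\lambda^+]^2_\lambda$ then $c^+$ witnesses $\lambda^+\nrightarrow_p[\lambda^+]^2_{\lambda^+}$; (2) for every cardinal $\varkappa$, if $c$ witnesses $\lambda^+\nrightarrow_p[\varkappa\circledast\lambda^+]^2_\lambda$ then $c^+$ witnesses $\lambda^+\nrightarrow_p[\varkappa\circledast\lambda^+]^2_{\lambda^+}$.
   Context: $[\kappa]^2$ denotes the set of pairs $(\alpha,\beta)$ with $\alpha<\beta<\kappa$; a partition is any function $p:[\kappa]^2\to\mu$. Given $p:[\kappa]^2\to\mu$, a coloring $c:[\kappa]^2\to\theta$ witnesses $\kappa\nrightarrow_p[\kappa]^2_\theta$ iff for every $A\subseteq\kappa$ with $|A|=\kappa$ and every $\tau:\mu\to\theta$ there are $\alpha<\beta$ in $A$ with $c(\alpha,\beta)=\tau(p(\alpha,\beta))$. It witnesses $\kappa\nrightarrow_p[\varkappa\circledast\kappa]^2_\theta$ iff for every $A\subseteq\kappa$ with $|A|=\varkappa$, every $B\subseteq\kappa$ with $|B|=\kappa$, and every $\tau:\mu\to\theta$ there are $\alpha\in A$ and $\beta\in B$ with $\alpha<\beta$ and $c(\alpha,\beta)=\tau(p(\alpha,\beta))$. *)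

(* Defs.v *)
From HB Require Import structures.
From mathcomp Require Import all_boot.
From mathcomp Require Import boolp classical_sets cardinality.
Set Implicit Arguments. Unset Strict Implicit. Unset Printing Implicit Defensive.

Local Open Scope classical_set_scope.

(* A cardinal is represented by a type (up to bijection).
   [strict_well_order lt] : lt is a strict total well-ordering of K. *)
Definition strict_well_order (K : Type) (lt : K -> K -> Prop) : Prop :=
  [/\ well_founded lt,
      (forall a b c, lt a b -> lt b c -> lt a c),
      (forall a, ~ lt a a) &
      (forall a b, [\/ lt a b, a = b | lt b a])].

(* (K, lt) is (order-isomorphic to) the ordinal lambda^+ where lambda = |L|:
   a well-order of size > lambda all of whose proper initial segments
   have size <= lambda. *)
Definition is_successor_ordinal_of (L K : Type) (lt : K -> K -> Prop) : Prop :=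
  [/\ strict_well_order lt,
      ~ card_le [set: K] [set: L] &
      (forall b : K, card_le [set a | lt a b] [set: L])].

(* c witnesses  kappa -/->_p [kappa]^2_theta  where kappa = (K,lt),
   p : [kappa]^2 -> M, c : [kappa]^2 -> C (theta = |C|).
   Colorings on pairs are given as binary functions; only values on
   pairs a < b matter. *)
Definition witnesses_sq (K M C : Type) (lt : K -> K -> Prop)
    (p : K -> K -> M) (c : K -> K -> C) : Prop :=
  forall A : set K, card_eq A [set: K] ->
  forall tau : M -> C,
  exists a b, [/\ A a, A b, lt a b & c a b = tau (p a b)].

(* c witnesses  kappa -/->_p [varkappa circledast kappa]^2_theta, varkappa = |X|. *)
Definition witnesses_circ (K M C X : Type) (lt : K -> K -> Prop)
    (p : K -> K -> M) (c : K -> K -> C) : Prop :=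
  forall A B : set K, card_eq A [set: X] -> card_eq B [set: K] ->
  forall tau : M -> C,
  exists a b, [/\ A a, B b, lt a b & c a b = tau (p a b)].

(* Main.v *)
Require Import Defs.
From HB Require Import structures.
From mathcomp Require Import all_boot.
From mathcomp Require Import boolp classical_sets functions cardinality.
Set Implicit Arguments. Unset Strict Implicit. Unset Printing Implicit Defensive.
Local Open Scope classical_set_scope.

Definition injon T U (A : set T) (f : T -> U) :=
  forall x y, A x -> A y -> f x = f y -> x = y.
Definition mapsto T U (A : set T) (B : set U) (f : T -> U) :=
  forall x, A x -> B (f x).

Lemma le_of_inj T U (A : set T) (B : set U) (f : T -> U) :
  mapsto A B f -> injon A f -> (A #<= B)%card.
Proof.
move=> fAB fi; apply/card_subP; exists (f @` A).
  apply: inj_card_eq => x y /set_mem Ax /set_mem Ay; exact: fi.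
by move=> _ [x Ax <-]; exact: fAB.
Qed.

Lemma inj_of_le T U (A : set T) (B : set U) (u0 : U) :
  (A #<= B)%card -> exists f, mapsto A B f /\ injon A f.
Proof.
move/card_leP => [g].
pose f x := match pselect (A x) with
  | left h => val (g (SigSub (mem_set h))) | right _ => u0 end.
exists f; split.
  move=> x Ax; rewrite /f; case: pselect => // h.
  exact: set_valP.
move=> x y Ax Ay; rewrite /f; case: pselect => // hx; case: pselect => // hy.
move/val_inj => /(@inj _ _ _ g) E.
have := E (mem_set I) (mem_set I).
by move=> /(congr1 val).
Qed.

Lemma graph_fun T U (A : set T) (G : set (T * U)) (u0 : U) :
  (forall a a' b b', G (a, b) -> G (a', b') -> (a = a' <-> b = b')) ->
  (forall a, A a -> exists b, G (a, b)) ->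
  exists f : T -> U, (forall a, A a -> G (a, f a)) /\ injon A f.
Proof.
move=> Gi Ad.
pose f a := match pselect (exists b, G (a, b)) with
  | left h => proj1_sig (cid h) | right _ => u0 end.
have fG a : A a -> G (a, f a).
  move=> Aa; rewrite /f; case: pselect => [h|]; last by move: (Ad a Aa).
  by case: (cid h).
exists f; split => // x y Ax Ay E.
by apply/(Gi _ _ _ _ (fG x Ax) (fG y Ay)).
Qed.

Lemma compare T U (A : set T) (B : set U) (t0 : T) (u0 : U) :
  (exists f, mapsto A B f /\ injon A f) \/ (exists g, mapsto B A g /\ injon B g).
Proof.
pose P (G : set (T * U)) :=
  (forall a b, G (a, b) -> A a /\ B b) /\
  (forall a a' b b', G (a, b) -> G (a', b') -> (a = a' <-> b = b')).
have [G [[GAB Gi] Gmax]] : exists G, P G /\ forall G', G `<` G' -> ~ P G'.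
  apply: Zorn_bigcup => F FP Ftot; split.
    by move=> a b [X FX Xab]; exact: (FP X FX).1.
  move=> a a' b b' [X FX Xab] [Y FY Yab].
  have [XY|YX] := Ftot X Y FX FY.
    by apply: (FP Y FY).2 => //; exact: XY.
  by apply: (FP X FX).2 => //; exact: YX.
have [HA|HA] := pselect (forall a, A a -> exists b, G (a, b)).
  left; have [f [fG fi]] := graph_fun u0 Gi HA.
  by exists f; split => // a Aa; exact: (GAB _ _ (fG a Aa)).2.
have [HB|HB] := pselect (forall b, B b -> exists a, G (a, b)).
  right.
  have Gi' : forall b b' a a', [set p : U * T | G (p.2, p.1)] (b, a) ->
     [set p : U * T | G (p.2, p.1)] (b', a') -> (b = b' <-> a = a').
    by move=> b b' a a' /= h1 h2; split => E; apply/(Gi _ _ _ _ h1 h2).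
  have [g [gG gi]] := graph_fun t0 Gi' HB.
  by exists g; split => // b Bb; exact: (GAB _ _ (gG b Bb)).1.
exfalso.
move/existsNP: HA => [a /not_implyP [Aa /forallNP na]].
move/existsNP: HB => [b /not_implyP [Bb /forallNP nb]].
apply: (Gmax (G `|` [set (a, b)])).
  split; first by move=> x Gx; left.
  by move=> /(_ (a, b) (or_intror erefl)); apply: na.
split.
  by move=> x y [/GAB//|[-> ->]].
move=> x x' y y' [Gxy|[-> ->]] [Gxy'|[-> ->]].
- exact: Gi.
- by split=> E; [move: Gxy; rewrite E => /na|move: Gxy; rewrite E => /(nb x)].
- by split=> E; [move: Gxy'; rewrite -E => /na|move: Gxy'; rewrite -E => /(nb x')].
- by [].
Qed.
Lemma eq_bij T U (A : set T) (B : set U) (u0 : U) :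
  (A #= B)%card -> exists h, [/\ mapsto A B h, injon A h &
     forall b, B b -> exists2 a, A a & h a = b].
Proof.
move/card_bijP => [f [finv fK finvK]].
pose h x := match pselect (A x) with
  | left H => val (f (SigSub (mem_set H))) | right _ => u0 end.
have hE (a : set_type A) : h (val a) = val (f a).
  rewrite /h; case: pselect => [H|]; last by move: (set_valP a).
  by congr (val (f _)); apply: val_inj.
exists h; split.
- by move=> x Ax; rewrite /h; case: pselect => // H; exact: set_valP.
- move=> x y Ax Ay.
  rewrite -[x]/(val (SigSub (mem_set Ax))) -[y]/(val (SigSub (mem_set Ay))) !hE.
  by move/val_inj/(can_inj fK) => ->.
- move=> b Bb; exists (val (finv (SigSub (mem_set Bb)))); first exact: set_valP.
  by rewrite hE finvK.
Qed.

Lemma inv_on T U (A : set T) (f : T -> U) (t0 : T) :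
  injon A f -> exists finv, forall a, A a -> finv (f a) = a.
Proof.
move=> fi.
pose finv u := match pselect (exists2 a, A a & f a = u) with
  | left H => proj1_sig (cid2 H) | right _ => t0 end.
exists finv => a Aa; rewrite /finv; case: pselect => [H|[]]; last by exists a.
by case: (cid2 H) => /= x Ax fx; apply: fi.
Qed.

Definition rng T (G : set ((T * T) * T)) : set T := [set z | exists p, G (p, z)].

Definition PG T (X : set T) (G : set ((T * T) * T)) :=
  [/\ forall p z, G (p, z) -> rng G p.1 /\ rng G p.2,
      forall x y, rng G x -> rng G y -> exists z, G ((x, y), z),
      forall p p' z z', G (p, z) -> G (p', z') -> (p = p' <-> z = z'),
      (rng G = set0 \/ infinite_set (rng G)) &
      rng G `<=` X].

Lemma rng_sub T (G G' : set ((T * T) * T)) : G `<=` G' -> rng G `<=` rng G'.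
Proof. by move=> GG' z [p Gp]; exists p; apply: GG'. Qed.

Lemma PG_chain T (X : set T) (F : set (set ((T * T) * T))) :
  F `<=` PG X -> total_on F subset -> PG X (\bigcup_(Y in F) Y).
Proof.
move=> FP Ftot.
have rU z : rng (\bigcup_(Y in F) Y) z -> exists2 Y, F Y & rng Y z.
  by move=> [p [Y FY Ypz]]; exists Y => //; exists p.
have Ur Y : F Y -> rng Y `<=` rng (\bigcup_(Y in F) Y).
  by move=> FY; apply: rng_sub => q Yq; exists Y.
split.
- move=> p z [Y FY Ypz]; case: (FP Y FY) => P1 _ _ _ _.
  have [h1 h2] := P1 p z Ypz.
  by split; apply: (Ur Y FY).
- move=> x y /rU [Y1 F1 r1] /rU [Y2 F2 r2].
  case: (FP Y1 F1) => _ P1 _ _ _; case: (FP Y2 F2) => _ P2 _ _ _.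
  have [S12|S21] := Ftot Y1 Y2 F1 F2.
    have [z Gz] := P2 x y (rng_sub S12 r1) r2.
    by exists z; exists Y2.
  have [z Gz] := P1 x y r1 (rng_sub S21 r2).
  by exists z; exists Y1.
- move=> p p' z z' [Y FY Yp] [Y' FY' Yp'].
  case: (FP Y FY) => _ _ P1 _ _; case: (FP Y' FY') => _ _ P2 _ _.
  have [S|S] := Ftot Y Y' FY FY'.
    by apply: P2 => //; apply: S.
  by apply: P1 => //; apply: S.
- have [->|/set0P[z rz]] := eqVneq (rng (\bigcup_(Y in F) Y)) set0; first by left.
  right; have [Y FY rY] := rU z rz.
  case: (FP Y FY) => _ _ _ P4 _.
  have [E|] := P4; first by move: rY; rewrite E.
  by apply: sub_infinite_set; apply: Ur.
- by move=> z /rU [Y FY rY]; case: (FP Y FY) => _ _ _ _ P5; apply: P5.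
Qed.

Lemma PG_nat T (X : set T) : infinite_set X -> exists G0, PG X G0 /\ rng G0 !=set0.
Proof.
move=> iX; have [t0 _] := infinite_setN0 iX.
have [e [eX ei]] := inj_of_le t0 (iffLR (infiniteP X) iX).
have [fn [_ fni fns]] := eq_bij 0 card_nat2.
pose G0 := [set q : (T * T) * T | exists i j, q = ((e i, e j), e (fn (i, j)))].
have rG0 z : rng G0 z <-> exists k, z = e k.
  split; first by move=> [p [i [j [_ ->]]]]; exists (fn (i, j)).
  move=> [k ->]; have [[i j] _ <-] := fns k I.
  by exists (e i, e j); exists i, j.
exists G0; split; last by exists (e (fn (0, 0))%N); apply/rG0; eexists.
split.
- by move=> p z [i [j [-> _]]]; split; apply/rG0; eexists.
- move=> x y /rG0 [k ->] /rG0 [l ->]; exists (e (fn (k, l))).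
  by exists k, l.
- move=> p p' z z' [i [j [-> ->]]] [i' [j' [-> ->]]].
  split.
    by case=> /ei-/(_ I I) -> /ei-/(_ I I) ->.
  move/ei => /(_ I I)/fni => /(_ I I) [-> ->]//.
- right; apply/infiniteP; apply: (@le_of_inj _ _ _ _ e).
    by move=> k _; apply/rG0; exists k.
  by move=> x y _ _ /ei; apply.
- by move=> z /rG0 [k ->]; apply: eX.
Qed.

Theorem hessenberg T (X : set T) : infinite_set X ->
  exists f : T * T -> T, (forall x y, X x -> X y -> X (f (x, y))) /\
    (forall x y x' y', X x -> X y -> X x' -> X y' ->
       f (x, y) = f (x', y') -> x = x' /\ y = y').
Proof.
move=> iX; have [t0 _] := infinite_setN0 iX.
have [G [PGG Gmax]] : exists G, PG X G /\ forall G', G `<` G' -> ~ PG X G'.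
  by apply: Zorn_bigcup; exact: PG_chain.
case: PGG => G1 G2 G3 G4 G5.
set D := rng G.
have iD : infinite_set D.
  case: G4 => // D0; exfalso.
  have [G0 [PG0 [z rz]]] := PG_nat iX.
  apply: (Gmax G0) => //; split.
    move=> q Gq; exfalso; have : D q.2 by exists q.1; case: q Gq.
    by rewrite /D D0.
  move=> S; move: rz => [p G0p]; have : D z by exists p; exact: S.
  by rewrite /D D0.
have [g [gG gi]] := @graph_fun _ _ [set p : T * T | D p.1 /\ D p.2] G t0 G3
  (fun p => match p with (x, y) => fun H => G2 x y H.1 H.2 end).
have gD x y : D x -> D y -> D (g (x, y)).
  by move=> Dx Dy; exists (x, y); apply: (gG (x, y)).
have gI x y x' y' : D x -> D y -> D x' -> D y' ->
    g (x, y) = g (x', y') -> x = x' /\ y = y'.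
  move=> Dx Dy Dx' Dy' E.
  by have := gi (x, y) (x', y') (conj Dx Dy) (conj Dx' Dy') E => -[-> ->].
have [k [kD ki]] := inj_of_le t0 (iffLR (infiniteP D) iD).
have a01 : k 0%N <> k 1%N by move/ki => /(_ I I).
have a02 : k 0%N <> k 2%N by move/ki => /(_ I I).
have a12 : k 1%N <> k 2%N by move/ki => /(_ I I).
have DX : D `<=` X := G5.
have [[j [jX ji]]|[kk [kX kki]]] := compare D (X `\` D) t0 t0; last first.
  pose phi x := if pselect (D x) then g (x, k 0%N) else g (kk x, k 1%N).
  have phiD x : X x -> D (phi x).
    move=> Xx; rewrite /phi; case: pselect => Dx; first exact: gD (kD _ I).
    by apply: (gD) (kD _ I); apply: (kX).
  have phii x y : X x -> X y -> phi x = phi y -> x = y.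
    move=> Xx Xy; rewrite /phi; case: pselect => Dx; case: pselect => Dy.
    - by move/gI => /(_ Dx (kD _ I) Dy (kD _ I)) [].
    - by move/gI => /(_ Dx (kD _ I) (kX y (conj Xy Dy)) (kD _ I)) [_ /a01].
    - by move/gI => /(_ (kX x (conj Xx Dx)) (kD _ I) Dy (kD _ I)) [_ /esym/a01].
    - move/gI => /(_ (kX x (conj Xx Dx)) (kD _ I) (kX y (conj Xy Dy)) (kD _ I)) [E _].
      by apply: kki E.
  exists (fun p => g (phi p.1, phi p.2)); split.
    by move=> x y Xx Xy /=; apply: (DX); apply: (gD); apply: (phiD).
  move=> x y x' y' Xx Xy Xx' Xy' /= /gI.
  move=> /(_ (phiD _ Xx) (phiD _ Xy) (phiD _ Xx') (phiD _ Xy')) [E1 E2].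
  by split; apply: phii.
exfalso.
have [jinv jK] := inv_on t0 ji.
pose B := j @` D.
have BnD b : B b -> ~ D b /\ X b.
  by move=> [d Dd <-]; have [] := jX d Dd.
pose E := [set p : T * T | (D `|` B) p.1 /\ (D `|` B) p.2 /\ ~ (D p.1 /\ D p.2)].
pose rho x := if pselect (D x) then x else jinv x.
have rhoD x : (D `|` B) x -> D (rho x).
  move=> Bx; rewrite /rho; case: pselect => //= Dx.
  by case: Bx => // -[d Dd Ed]; rewrite -Ed jK.
have rhoi x y : (D `|` B) x -> (D `|` B) y -> (D x <-> D y) -> rho x = rho y -> x = y.
  rewrite /rho => Bx By DD; case: pselect => Dx; case: pselect => Dy /=.
  - by [].
  - by exfalso; apply: Dy; apply/DD.
  - by exfalso; apply: Dx; apply/DD.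
  case: Bx => // -[dx Ddx Ex]; case: By => // -[dy Ddy Ey].
  by rewrite -Ex -Ey !jK // => ->.
pose tag (p : T * T) := if pselect (D p.1) then k 0%N
  else if pselect (D p.2) then k 1%N else k 2%N.
have tagP p : E p -> [\/ tag p = k 0%N /\ D p.1 /\ ~ D p.2,
                        tag p = k 1%N /\ ~ D p.1 /\ D p.2 |
                        tag p = k 2%N /\ ~ D p.1 /\ ~ D p.2].
  case=> _ [_ nD]; rewrite /tag; case: pselect => D1.
    by apply: Or31; split => //; split => // D2; apply: nD.
  by case: pselect => D2; [apply: Or32|apply: Or33].
pose hE p := j (g (g (rho p.1, rho p.2), tag p)).
have tagD p : D (tag p).
  by rewrite /tag; case: pselect => ? /=; [|case: pselect => ? /=]; apply: (kD).
have hEB p : E p -> B (hE p).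
  move=> [B1 [B2 _]]; exists (g (g (rho p.1, rho p.2), tag p)) => //.
  by apply: (gD) => //; apply: (gD); apply: (rhoD).
have hEi : injon E hE.
  move=> [x y] [x' y'] Ep Ep' Ej.
  have Dgp := gD _ _ (rhoD _ Ep.1) (rhoD _ Ep.2.1).
  have Dgp' := gD _ _ (rhoD _ Ep'.1) (rhoD _ Ep'.2.1).
  move: (ji _ _ (gD _ _ Dgp (tagD (x, y))) (gD _ _ Dgp' (tagD (x', y'))) Ej).
  move=> /(gI _ _ _ _ Dgp (tagD _) Dgp' (tagD _)) [E1 Et].
  have [Er1 Er2] := gI _ _ _ _ (rhoD _ Ep.1) (rhoD _ Ep.2.1) (rhoD _ Ep'.1) (rhoD _ Ep'.2.1) E1.
  have [M1 M2] : (D x <-> D x') /\ (D y <-> D y').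
    move: Et; case: (tagP _ Ep) => -[-> /= [H1 H2]];
      case: (tagP _ Ep') => -[-> /= [H1' H2']] Et; 
      try (by exfalso; first [exact: a01 Et | exact: a02 Et | exact: a12 Et
                          | exact: a01 (esym Et) | exact: a02 (esym Et) | exact: a12 (esym Et)]);
      by split; split.
  congr (_, _).
    exact: rhoi Ep.1 Ep'.1 M1 Er1.
  exact: rhoi Ep.2.1 Ep'.2.1 M2 Er2.
have EB : (E #= B)%card.
  apply: Cantor_Bernstein; first exact: le_of_inj hEB hEi.
  apply: (@le_of_inj _ _ _ _ (fun b => (b, b))).
    move=> b Bb; split; first by right.
    by split; [right|move=> [/(BnD _ Bb).1]].
  by move=> x y _ _ [].
have [h [hB hi hs]] := eq_bij t0 EB.
pose G' := G `|` [set q | E q.1 /\ q.2 = h q.1].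
have rngG' z : rng G' z <-> (D `|` B) z.
  split.
    by move=> [p [Gp|[Ep /= ->]]]; [left; exists p|right; apply: hB].
  move=> [[p Gp]|Bz]; first by exists p; left.
  by have [p Ep <-] := hs z Bz; exists p; right.
have GD p z : G (p, z) -> D p.1 /\ D p.2 /\ D z.
  by move=> Gp; have [] := G1 p z Gp; split => //; split => //; exists p.
apply: (Gmax G').
  split; first by move=> q Gq; left.
  move=> S.
  have Bb : B (j (k 0%N)) by exists (k 0%N) => //; exact: kD.
  have Eb : E (j (k 0%N), j (k 0%N)).
    by split; [right|split; [right|move=> [/(BnD _ Bb).1]]].
  have /S Gb : G' ((j (k 0%N), j (k 0%N)), h (j (k 0%N), j (k 0%N))).
    by right.
  by have [/(BnD _ Bb).1] := GD _ _ Gb.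
split.
- move=> p z [/GD [D1 [D2 _]]|[[B1 [B2 _]] _]].
    by split; apply/rngG'; left.
  by split; apply/rngG'.
- move=> x y /rngG' Bx /rngG' By.
  have [[Dx Dy]|nD] := pselect (D x /\ D y).
    by have [z Gz] := G2 x y Dx Dy; exists z; left.
  by exists (h (x, y)); right.
- move=> p p' z z' [Gp|[Ep /= ->]] [Gp'|[Ep' /= ->]].
  + exact: G3.
  + have [D1 [D2 Dz]] := GD _ _ Gp.
    split=> E0; exfalso.
      by subst p'; apply: Ep'.2.2.
    by subst z; apply: (BnD _ (hB _ Ep')).1.
  + have [D1 [D2 Dz]] := GD _ _ Gp'.
    split=> E0; exfalso.
      by subst p'; apply: Ep.2.2.
    by subst z'; apply: (BnD _ (hB _ Ep)).1.
  + by split=> [->//|]; apply: hi.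
- right; apply: sub_infinite_set iD.
  by move=> z Dz; apply/rngG'; left.
- move=> z /rngG' [/DX//|/BnD[]//].
Qed.

Definition leT K L (A : set K) := exists f : K -> L, injon A f.
Arguments leT {K} L A.

Lemma leT_card K L (l0 : L) (A : set K) : leT L A <-> (A #<= [set: L])%card.
Proof.
split; first by move=> [f fi]; exact: (@le_of_inj _ _ _ _ f).
by move/(inj_of_le l0) => [f [_ fi]]; exists f.
Qed.

Lemma leT_sub K L (A B : set K) : A `<=` B -> leT L B -> leT L A.
Proof. by move=> AB [f fi]; exists f => x y Ax Ay; apply: fi; apply: AB. Qed.

Lemma leT_1 K L (l0 : L) (x : K) : leT L [set x].
Proof. by exists (fun _ => l0) => a b -> ->. Qed.

Lemma leT_U2 K L (h : L * L -> L) (hi : injective h) (l0 l1 : L) :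
  l0 <> l1 -> forall (A B : set K), leT L A -> leT L B -> leT L (A `|` B).
Proof.
move=> l01 A B [f fi] [g gi].
exists (fun x => if pselect (A x) then h (f x, l0) else h (g x, l1)).
move=> x y Ax Ay; case: pselect => a; case: pselect => b /= /hi E;
  have /= E1 := congr1 fst E; have /= E2 := congr1 snd E.
- exact: fi E1.
- by case: l01.
- by case: l01.
- by apply: gi E1; [case: Ax|case: Ay].
Qed.

Lemma mem_seg1 K (lt : K -> K -> Prop)
  (trich : forall a b, [\/ lt a b, a = b | lt b a]) (y b : K) :
  ~ lt b y -> ([set a | lt a b] `|` [set b]) y.
Proof. by move=> nb; case: (trich y b) => [H|->|/nb//]; [left|right]. Qed.

Lemma bounded K L (lt : K -> K -> Prop)
  (trich : forall a b, [\/ lt a b, a = b | lt b a])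
  (notKL : ~ ([set: K] #<= [set: L])%card)
  (l0 : L) (h : L * L -> L) (hi : injective h)
  (seg1 : forall b, leT L ([set a | lt a b] `|` [set b]))
  (M : Type) (tau : M -> K) (fM : M -> L) (fMi : injective fM) :
  exists e, forall m, lt (tau m) e.
Proof.
have [//|H] := pselect (exists e, forall m, lt (tau m) e).
exfalso; apply: notKL.
have H' y : exists m, ~ lt (tau m) y.
  by apply/existsNP => Hy; apply: H; exists y.
pose mu y := proj1_sig (cid (H' y)).
pose psi b := proj1_sig (cid (seg1 b)).
have psii b : injon ([set a | lt a b] `|` [set b]) (psi b).
  by rewrite /psi; case: cid.
apply/(leT_card l0); exists (fun y => h (fM (mu y), psi (tau (mu y)) y)).
move=> y y' _ _ /hi E.
have /= /fMi Em := congr1 fst E; have /= E2 := congr1 snd E.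
rewrite Em in E2; apply: (psii _ _ _ _ _ E2); apply: mem_seg1 => //.
  by rewrite -Em /mu; case: cid.
by rewrite /mu; case: cid.
Qed.

Lemma big K L (lt : K -> K -> Prop)
  (trich : forall a b, [\/ lt a b, a = b | lt b a])
  (iL : infinite_set [set: L]) (l0 : L) (k0 : K)
  (seg : forall b, leT L [set a | lt a b])
  (seg1 : forall b, leT L ([set a | lt a b] `|` [set b]))
  (F : set K) : ~ leT L F -> (F #= [set: K])%card.
Proof.
move=> nF; apply: Cantor_Bernstein; first exact: (@le_of_inj _ _ _ _ id).
have unb y : exists b, F b /\ ~ lt b y.
  apply: contrapT => H; apply: nF.
  have sub : F `<=` [set a | lt a y].
    by move=> b Fb; apply: contrapT => nb; apply: H; exists b.
  exact: leT_sub sub (seg y).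
pose phi y := proj1_sig (cid (unb y)).
have phiP y : F (phi y) /\ ~ lt (phi y) y by rewrite /phi; case: cid.
pose psi b := proj1_sig (cid (seg1 b)).
have psii b : injon ([set a | lt a b] `|` [set b]) (psi b).
  by rewrite /psi; case: cid.
have [[io [ioF ioi]]|[f [_ fi]]] := compare [set: L] F l0 k0; last first.
  by case: nF; exists f.
have iF : infinite_set F.
  move=> /finite_set_countable cF; apply: nF; apply/(leT_card l0).
  by apply: card_le_trans cF _; apply/infiniteP.
have [m [mF mi]] := hessenberg iF.
apply: (@le_of_inj _ _ _ _ (fun y => m (phi y, io (psi (phi y) y)))).
  by move=> y _; apply: mF; [exact: (phiP y).1|exact: ioF].
move=> y y' _ _ /mi.
move=> /(_ (phiP y).1 (ioF _ I) (phiP y').1 (ioF _ I)) [Ep /ioi].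
move=> /(_ I I) E2; rewrite Ep in E2; apply: (psii _ _ _ _ _ E2).
  by rewrite -Ep; apply: mem_seg1 => //; exact: (phiP y).2.
by apply: mem_seg1 => //; exact: (phiP y').2.
Qed.

Theorem proposition3p2
  (L : Type) (Linf : ~ finite_set [set: L])
  (K : Type) (lt : K -> K -> Prop) (HK : is_successor_ordinal_of L lt)
  (c : K -> K -> L) :
  exists cplus : K -> K -> K,
    forall (M : Type), card_le [set: M] [set: L] ->
    forall p : K -> K -> M,
      (witnesses_sq lt p c -> witnesses_sq lt p cplus) /\
      (forall X : Type, witnesses_circ X lt p c -> witnesses_circ X lt p cplus).
Proof.
case: HK => -[_ _ _ trich] notKL segL.
have [l0 _] := infinite_setN0 Linf.
have [en [_ eni]] := inj_of_le l0 (iffLR (infiniteP _) Linf).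
have l01 : en 0%N <> en 1%N by move/eni => /(_ I I).
have [h [_ h0i]] := hessenberg Linf.
have hi : injective h.
  by move=> [x y] [x' y'] /h0i => /(_ I I I I) [-> ->].
have [k0 _] : exists k : K, True.
  apply: contrapT => nK; apply: notKL.
  apply: (@le_of_inj _ _ _ _ (fun _ => l0)) => // x.
  by exfalso; apply: nK; exists x.
have segT b : leT L [set a | lt a b] by apply/(leT_card l0).
have seg1 b : leT L ([set a | lt a b] `|` [set b]).
  exact: (@leT_U2 K L h hi _ _ l01 _ _ (segT b) (leT_1 l0 b)).
pose e b := proj1_sig (cid (segT b)).
have ei b : injon [set a | lt a b] (e b) by rewrite /e; case: cid.
have Hf b : exists f : L -> K, forall a, lt a b -> f (e b a) = a.
  exact: inv_on k0 (ei b).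
pose fe b := proj1_sig (cid (Hf b)).
have feK b a : lt a b -> fe b (e b a) = a by rewrite /fe; case: cid => f /= fK; apply: fK.
have [dec decK] := @inv_on _ _ [set: L * L] h (l0, l0) (fun x y _ _ E => hi _ _ E).
pose cplus a b := fe (fe b (dec (c a b)).1) (dec (c a b)).2.
exists cplus => M HM p.
have [fM [_ fMi']] := inj_of_le l0 HM.
have fMi : injective fM by move=> x y; apply: fMi'.
have key : forall Bs : set K, (Bs #= [set: K])%card -> forall eps,
    exists i F, [/\ (F #= [set: K])%card, F `<=` Bs & forall b, F b -> fe b i = eps].
  move=> Bs HB eps.
  pose A' := Bs `&` [set b | lt eps b].
  have nA' : ~ leT L A'.
    move=> HA'; apply: notKL.
    have sub : Bs `<=` A' `|` ([set a | lt a eps] `|` [set eps]).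
      move=> b Bb; case: (trich eps b) => [H|->|H].
      - by left.
      - by right; right.
      - by right; left.
    have /(leT_card l0) LB := leT_sub sub (leT_U2 hi l01 HA' (seg1 eps)).
    apply: card_le_trans LB.
    by move/card_eqPle: HB => [].
  have [i ni] : exists i, ~ leT L (A' `&` [set b | e b eps = i]).
    apply: contrapT => H; apply: nA'.
    have H2 i : leT L (A' `&` [set b | e b eps = i]).
      by apply: contrapT => nn; apply: H; exists i.
    pose g i := proj1_sig (cid (H2 i)).
    have gi i : injon (A' `&` [set b | e b eps = i]) (g i) by rewrite /g; case: cid.
    exists (fun b => h (e b eps, g (e b eps) b)).
    move=> x y Ax Ay /hi E.
    have /= E1 := congr1 fst E; have /= E2 := congr1 snd E.
    rewrite -E1 in E2; apply: (gi _ _ _ _ _ E2) => //.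
  exists i, (A' `&` [set b | e b eps = i]); split.
  - exact: big trich Linf l0 k0 segT seg1 _ ni.
  - by move=> b [[]].
  - by move=> b [[_ lb] /= <-]; exact: feK.
split.
- move=> W A HA tau.
  have [eps heps] := bounded trich notKL l0 hi seg1 tau fMi.
  have [i [F [HF FA Fe]]] := key A HA eps.
  have [a [b [Fa Fb lab E]]] := W F HF (fun m => h (i, e eps (tau m))).
  exists a, b; split => //; try exact: FA.
  by rewrite /cplus E decK //= Fe // feK.
- move=> X W A B HA HB tau.
  have [eps heps] := bounded trich notKL l0 hi seg1 tau fMi.
  have [i [F [HF FB Fe]]] := key B HB eps.
  have [a [b [Aa Fb lab E]]] := W A F HA HF (fun m => h (i, e eps (tau m))).
  exists a, b; split => //; try exact: FB.
  by rewrite /cplus E decK //= Fe // feK.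
Qed.
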